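(* Let $\mathcal{A}$ be a unital $C^*$-algebra with unit $1_{\mathcal{A}}$ and let $S$ be the unilateral shift on $H_{\mathcal{A}}$ ($Se_k=e_{k+1}$, $k\in\mathbb{N}$). Then $1_{\mathcal{A}}\in\sigma^{\mathcal{A}}(S)$.
   Context: $H_{\mathcal{A}}=l_2(\mathcal{A})$ is the standard Hilbert $C^*$-module of sequences $(x_1,x_2,\dots)$ in $\mathcal{A}$ with $\sum_k x_k^*x_k$ norm-convergent, inner product $\langle x,y\rangle=\sum_k x_k^*y_k$; $\{e_k\}$ is its standard orthonormal basis. $B^a(H_{\mathcal{A}})$ denotes the bounded adjointable $\mathcal{A}$-linear operators on $H_{\mathcal{A}}$. For $\alpha\in\mathcal{A}$, $\alpha I$ is the operator $(x_k)\mapsto(\alpha x_k)$. For $F\in B^a(H_{\mathcal{A}})$, $\sigma^{\mathcal{A}}(F)=\{\alpha\in\mathcal{A}\mid F-\alpha I$ is not invertible in $B^a(H_{\mathcal{A}})\}$. *)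

(* Defs.v *)
From mathcomp Require Import all_boot all_order all_algebra.
From mathcomp Require Import all_reals.
From mathcomp Require Import complex.
Set Implicit Arguments. Unset Strict Implicit. Unset Printing Implicit Defensive.
Import Order.TTheory GRing.Theory Num.Theory.
Local Open Scope ring_scope.

Section CStar.
Variable R : realType.
Local Notation C := (R[i]).

Record is_unital_cstar (A : algType C) (star : A -> A) (nrm : A -> R) : Prop := {
  nrm_ge0   : forall a, 0 <= nrm a;
  nrm_eq0   : forall a, nrm a = 0 -> a = 0;
  nrm_triangle : forall a b, nrm (a + b) <= nrm a + nrm b;
  nrm_scale : forall (c : C) a, nrm (c *: a) = complex.Re `|c| * nrm a;
  nrm_submult : forall a b, nrm (a * b) <= nrm a * nrm b;
  star_add  : forall a b, star (a + b) = star a + star b;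
  star_scale : forall (c : C) a, star (c *: a) = c^* *: star a;
  star_mul  : forall a b, star (a * b) = star b * star a;
  star_invol : forall a, star (star a) = a;
  cstar_identity : forall a, nrm (star a * a) = nrm a ^+ 2;
  nrm_complete : forall u : nat -> A,
     (forall e : R, 0 < e -> exists N, forall m n, (N <= m)%N -> (N <= n)%N ->
        nrm (u m - u n) < e) ->
     exists l, forall e : R, 0 < e -> exists N, forall n, (N <= n)%N -> nrm (u n - l) < e
}.

Variables (A : algType C) (star : A -> A) (nrm : A -> R).

Definition cvg_to (u : nat -> A) (l : A) : Prop :=
  forall e : R, 0 < e -> exists N, forall n, (N <= n)%N -> nrm (u n - l) < e.

Definition inner_is (x y : nat -> A) (v : A) : Prop :=
  cvg_to (fun n => \sum_(k < n) star (x k) * y k) v.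

(* x belongs to H_A = l_2(A) *)
Definition in_HA (x : nat -> A) : Prop := exists v, inner_is x x v.

Definition seq_add (x y : nat -> A) : nat -> A := fun k => x k + y k.
Definition seq_rmul (x : nat -> A) (a : A) : nat -> A := fun k => x k * a.

(* F is a bounded adjointable A-linear operator on H_A *)
Definition is_Ba (F : (nat -> A) -> (nat -> A)) : Prop :=
  (forall x, in_HA x -> in_HA (F x)) /\
  (forall x y a b, in_HA x -> in_HA y ->
      F (seq_add (seq_rmul x a) (seq_rmul y b)) = seq_add (seq_rmul (F x) a) (seq_rmul (F y) b)) /\
  (exists M : R, 0 <= M /\ forall x v w, in_HA x ->
      inner_is (F x) (F x) v -> inner_is x x w -> nrm v <= M ^+ 2 * nrm w) /\
  (exists G : (nat -> A) -> (nat -> A),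
      (forall y, in_HA y -> in_HA (G y)) /\
      forall x y v, in_HA x -> in_HA y -> inner_is (F x) y v -> inner_is x (G y) v).

Definition invertible_Ba (F : (nat -> A) -> (nat -> A)) : Prop :=
  is_Ba F /\ exists G, is_Ba G /\
    (forall x, in_HA x -> G (F x) = x) /\ (forall x, in_HA x -> F (G x) = x).

Definition scalI (alpha : A) (x : nat -> A) : nat -> A := fun k => alpha * x k.

Definition op_sub (F G : (nat -> A) -> (nat -> A)) x : nat -> A :=
  fun k => F x k - G x k.

Definition A_spectrum (F : (nat -> A) -> (nat -> A)) : A -> Prop :=
  fun alpha => ~ invertible_Ba (op_sub F (scalI alpha)).

(* unilateral shift: S e_k = e_{k+1}, i.e. (S x)_0 = 0, (S x)_{k+1} = x_k *)
Definition shift (x : nat -> A) : nat -> A :=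
  fun k => if k is k'.+1 then x k' else 0.

End CStar.

(* Main.v *)
Require Import Defs.
From mathcomp Require Import all_boot all_order all_algebra.
From mathcomp Require Import all_reals.
From mathcomp Require Import complex.
Local Open Scope ring_scope.
Import GRing.Theory Num.Theory Order.TTheory.

Theorem corollary2p5 (R : realType) (A : algType (R[i])) (star : A -> A) (nrm : A -> R) :
  is_unital_cstar star nrm ->
  A_spectrum star nrm (shift (A:=A)) 1.
Proof.
move=> H [_ [G [[GH _] [_ FG]]]].
have nrm0 : nrm 0 = 0.
  by rewrite -(scale0r (0:A)) (nrm_scale H) normr0 /= mul0r.
have nrmN : forall a, nrm (- a) = nrm a.
  by move=> a; rewrite -scaleN1r (nrm_scale H) normrN normr1 /= mul1r.
have star0 : star 0 = 0.
  have h := star_add H 0 0; rewrite addr0 in h.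
  have h2 := congr1 (fun z => z - star 0) h; rewrite /= subrr addrK in h2; by rewrite -h2.
have starN : forall a, star (- a) = - star a.
  by move=> a; apply/eqP; rewrite -addr_eq0 -(star_add H) addNr star0 eqxx.
set e0 : nat -> A := fun k => if k is 0 then 1 else 0.
have He0 : in_HA star nrm e0.
  exists (star 1 * 1) => e he; exists 1%N => n hn.
  case: n hn => // n _; rewrite big_ord_recl /= big1 ?addr0 ?subrr ?nrm0 //.
  by move=> i _; rewrite star0 mul0r.
set y := G e0.
have Hy : in_HA star nrm y by apply: GH.
have Ty := FG e0 He0; rewrite -/y in Ty.
have yk : forall k, y k = -1.
  have t := fun k => congr1 (fun f => f k) Ty.
  elim=> [|k IH].
    by move: (t 0%N); rewrite /op_sub /shift /scalI /= mul1r sub0r => /eqP; rewrite eqr_oppLR => /eqP.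
  move: (t k.+1); rewrite /op_sub /shift /scalI /= mul1r IH => /eqP.
  by rewrite subr_eq0 => /eqP <-.
set c := star 1 * 1.
have sc : forall n, \sum_(k < n) star (y k) * y k = c *+ n.
  by move=> n; under eq_bigr => k _ do rewrite yk starN mulrN mulNr opprK; rewrite sumr_const card_ord.
have nc : nrm c = nrm 1 ^+ 2 by apply: (cstar_identity H).
have n1 : 0 < nrm 1.
  rewrite lt_neqAle (nrm_ge0 H) andbT eq_sym; apply/negP => /eqP/(nrm_eq0 H)/eqP.
  by rewrite oner_eq0.
have cpos : 0 < nrm c by rewrite nc exprn_gt0.
case: Hy => l Hl.
have [N HN] := Hl (nrm c / 2) (divr_gt0 cpos (ltr0Sn _ 1)).
have h1 := HN N.+1 (leqnSn N); have h2 := HN N (leqnn N).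
rewrite sc in h1; rewrite sc in h2.
have : nrm c <= nrm (c *+ N.+1 - l) + nrm (- (c *+ N - l)).
  rewrite {1}(_ : c = (c *+ N.+1 - l) + - (c *+ N - l)); first exact: (nrm_triangle H).
  by rewrite mulrS opprB addrA subrK addrK.
rewrite nrmN => h.
have := le_lt_trans h (ltrD h1 h2); rewrite -splitr.
by rewrite ltxx.
Qed.
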